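(* Consider a slotted system with diversity. There are $N$ users, $N_{sub}\ge2$ sub-carriers and slots $1,\dots,T$. In every slot, independently, the BS chooses a user uniformly at random and a sub-carrier uniformly at random, and sends an update to the chosen user on the chosen sub-carrier. The adversary uses a blocking matrix $\sigma\in\{0,1\}^{N_{sub}\times T}$, where $\sigma_j(t)=0$ means sub-carrier $j$ is blocked in slot $t$. Feasibility means $\sum_{j,t}(1-\sigma_j(t))\le\alpha T$ and at most one sub-carrier is blocked per slot, where $0<\alpha<1$. Ages satisfy $a_i(1)=1$, $a_i(t+1)=1$ if user $i$ is chosen in slot $t$ on an unblocked sub-carrier, and $a_i(t+1)=a_i(t)+1$ otherwise. The average age is $\Delta^{\sigma}_T=\frac1T\sum_{t=1}^T\frac1N\sum_i\mathbb E[a_i(t)]$. Then $$\limsup_{T\to\infty}\ \sup_{\sigma\text{ feasible}}\Delta^{\sigma}_T\le\frac{N N_{sub}}{N_{sub}-1}.$$ *)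

(* Defs.v *)
From HB Require Import structures.
From mathcomp Require Import all_boot all_order all_algebra.
From mathcomp Require Import reals.
Set Implicit Arguments. Unset Strict Implicit. Unset Printing Implicit Defensive.
Import Order.TTheory GRing.Theory Num.Theory.
Local Open Scope ring_scope.

(* Slots are 0-indexed: slot t+1 of the paper is the ordinal t : 'I_T.
   Sample space: one (user, sub-carrier) choice per slot; the uniform
   probability on this finite product space is exactly "independently in every
   slot, uniform user and uniform sub-carrier". *)
Definition outcome (N Nsub T : nat) := {ffun 'I_T -> 'I_N * 'I_Nsub}.

(* Blocking matrix sigma : {0,1}^{Nsub x T}; entry true <-> sigma_j(t) = 1
   (NOT blocked), false <-> sigma_j(t) = 0 (blocked). *)
Definition blocking (Nsub T : nat) := {ffun 'I_Nsub * 'I_T -> bool}.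

Definition feasible (R : realType) (Nsub T : nat) (alpha : R)
    (sigma : blocking Nsub T) : Prop :=
  ((#|[set jt | ~~ sigma jt]|)%:R <= alpha * T%:R)
  /\ (forall t : 'I_T, #|[set j : 'I_Nsub | ~~ sigma (j, t)]| <= 1)%N.

Definition success (N Nsub T : nat) (w : outcome N Nsub T)
    (sigma : blocking Nsub T) (i : 'I_N) (k : nat) : bool :=
  if (insub k : option 'I_T) is Some t then
    ((w t).1 == i) && sigma ((w t).2, t)
  else false.

(* age N Nsub T w sigma i k = a_i(k+1) *)
Fixpoint age (N Nsub T : nat) (w : outcome N Nsub T)
    (sigma : blocking Nsub T) (i : 'I_N) (k : nat) : nat :=
  if k is k'.+1 then
    (if success w sigma i k' then 1 else (age w sigma i k').+1)%N
  else 1%N.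

Definition exp_age (R : realType) (N Nsub T : nat) (sigma : blocking Nsub T)
    (i : 'I_N) (k : nat) : R :=
  (\sum_(w : outcome N Nsub T) (age w sigma i k)%:R)
    / (#|{: outcome N Nsub T}|)%:R.

Definition avg_age (R : realType) (N Nsub T : nat) (sigma : blocking Nsub T) : R :=
  (T%:R)^-1 * \sum_(t < T) ((N%:R)^-1 * \sum_(i < N) exp_age R sigma i t).

(* Main.v *)
Require Import Defs.
From HB Require Import structures.
From mathcomp Require Import all_boot all_order all_algebra.
From mathcomp Require Import reals.
From mathcomp Require Import lra zify.
Import Order.TTheory GRing.Theory Num.Theory.
Local Open Scope ring_scope.

Section Aux. Variable R : realType.
Lemma rec_step (F : nat -> R) k :
  1 + \sum_(m < k.+1) \prod_(m <= s < k.+1) F s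
  = 1 + F k * (1 + \sum_(m < k) \prod_(m <= s < k) F s).
Proof.
rewrite big_ord_recr big_nat1 mulrDr mulr1 mulr_sumr [F k + _]addrC.
congr (1 + (_ + _)).
apply: eq_bigr => m _.
rewrite big_nat_recr /=; last exact: ltnW.
exact: mulrC.
Qed.
Lemma prod_ordT (T m k : nat) (Fn : nat -> R) (Ft : 'I_T -> R) :
  (k <= T)%N -> (forall t : 'I_T, Fn t = Ft t) ->
  \prod_(m <= s < k) Fn s = \prod_(t : 'I_T) (if (m <= t < k)%N then Ft t else 1).
Proof.
move=> kT FE; rewrite big_geq_mkord (big_ord_widen_cond _ _ _ kT) big_mkcond /=.
apply: eq_bigr => t _; rewrite FE andbC; done.
Qed.
Lemma rec_bound (F : nat -> R) (q B : R) k :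
  1 <= B -> q * B = B - 1 -> (forall s, (s < k)%N -> 0 <= F s <= q) ->
  1 + \sum_(m < k) \prod_(m <= s < k) F s <= B.
Proof.
move=> B1 qB; elim: k => [|k IH] Hk.
  by rewrite big_ord0 addr0.
rewrite rec_step.
have /andP[F0 Fq] := Hk k (ltnSn k).
have IH' := IH (fun s hs => Hk s (ltnW hs)).
have E0 : 0 <= 1 + \sum_(m < k) \prod_(m <= s < k) F s.
  apply: addr_ge0 => //; apply: sumr_ge0 => m _; rewrite big_nat_cond; apply: prodr_ge0 => s /andP[/andP[_ hs] _].
  by have /andP[] := Hk s (ltnW hs).
have : F k * (1 + \sum_(m < k) \prod_(m <= s < k) F s) <= q * B by apply: ler_pM.
rewrite qB => h; rewrite -(subrK 1 B) addrC lerD2r; exact: h.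
Qed.
Lemma age_formula N Nsub T (w : outcome N Nsub T) sigma i k :
  (age w sigma i k)%:R = 1 + \sum_(m < k) \prod_(m <= s < k) ((~~ success w sigma i s)%:R : R).
Proof.
elim: k => [|k IH]; first by rewrite big_ord0 addr0.
rewrite rec_step -IH /=; case: (success w sigma i k) => /=.
  by rewrite mul0r addr0.
by rewrite mul1r -addn1 natrD addrC.
Qed.
Definition G {N Nsub T : nat} (sigma : blocking Nsub T) (i : 'I_N) (t : 'I_T) (c : 'I_N * 'I_Nsub) : R :=
  (~~ ((c.1 == i) && sigma (c.2, t)))%:R.

Lemma exp_age_formula N Nsub T (sigma : blocking Nsub T) (i : 'I_N) k :
  (0 < N)%N -> (0 < Nsub)%N -> (k <= T)%N ->
  exp_age R sigma i k = 1 + \sum_(m < k) \prod_(t : 'I_T)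
     (if (m <= t < k)%N then (\sum_c G sigma i t c) / #|{: 'I_N * 'I_Nsub}|%:R else 1).
Proof.
move=> N0 S0 kT.
have cE : #|{: outcome N Nsub T}|%:R = \prod_(t : 'I_T) (#|{: 'I_N * 'I_Nsub}|%:R : R).
  by rewrite prodr_const card_ffun card_ord natrX.
have c0 : (#|{: 'I_N * 'I_Nsub}|%:R : R) != 0.
  by rewrite pnatr_eq0 card_prod !card_ord muln_eq0 negb_or -!lt0n N0 S0.
rewrite /exp_age (eq_bigr (fun w : outcome N Nsub T => 1 + \sum_(m < k) \prod_(t : 'I_T)
     (if (m <= t < k)%N then G sigma i t (w t) else 1))); last first.
  move=> w _; rewrite age_formula; congr (1 + _); apply: eq_bigr => m _.
  apply: prod_ordT => // t; rewrite /success valK.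
  by case: (m <= t < k)%N.
rewrite big_split /= sumr_const -[_ *+ _]mulr_natl mulr1 mulrDl mulfV; last first.
  by rewrite cE; apply/prodf_neq0 => t.
congr (1 + _); rewrite exchange_big mulr_suml; apply: eq_bigr => m _.
rewrite -(bigA_distr_bigA (fun (t : 'I_T) (c : 'I_N * 'I_Nsub) => if (m <= t < k)%N then G sigma i t c else 1)).
rewrite cE -prodf_div; apply: eq_bigr => t _.
case: (m <= t < k)%N => //.
by rewrite sumr_const -[_ *+ _]mulr_natl mulr1 mulfV.
Qed.
Lemma G_sum_bound N Nsub T (sigma : blocking Nsub T) (i : 'I_N) (t : 'I_T) :
  (0 < Nsub)%N -> (#|[set j : 'I_Nsub | ~~ sigma (j, t)]| <= 1)%N ->
  \sum_c G sigma i t c <= (N * Nsub - Nsub.-1)%:R.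
Proof.
move=> S0 H1.
set s := fun j : 'I_Nsub => sigma (j, t).
have e1 : (\sum_(c : 'I_N * 'I_Nsub) (~~ ((c.1 == i) && s c.2) : nat)
   + \sum_(c : 'I_N * 'I_Nsub) (((c.1 == i) && s c.2) : nat) = N * Nsub)%N.
  rewrite -big_split /= (eq_bigr (fun _ => 1%N)); last by move=> c _; case: (_ && _).
  by rewrite sum_nat_const card_prod !card_ord muln1.
have e2 : (\sum_(c : 'I_N * 'I_Nsub) (((c.1 == i) && s c.2) : nat)
   = \sum_(j : 'I_Nsub) (s j : nat))%N.
  rewrite -(pair_bigA _ (fun a j => ((a == i) && s j) : nat)) /=.
  rewrite (bigD1 i) //= [X in (_ + X)%N]big1 ?addn0.
    by apply: eq_bigr => j _; rewrite eqxx.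
  by move=> a /negbTE Ha; apply: big1 => j _; rewrite Ha.
have e3 : (\sum_(j : 'I_Nsub) (s j : nat) + \sum_(j : 'I_Nsub) (~~ s j : nat) = Nsub)%N.
  rewrite -big_split /= (eq_bigr (fun _ => 1%N)); last by move=> c _; case: (s c).
  by rewrite sum_nat_const card_ord muln1.
have e4 : (\sum_(j : 'I_Nsub) (~~ s j : nat) <= 1)%N.
  rewrite (leq_trans _ H1) // -sum1_card [X in (_ <= X)%N]big_mkcond /=.
  by apply: eq_leq; apply: eq_bigr => j _; rewrite inE /s; case: (sigma (j, t)).
have -> : \sum_c G sigma i t c = (\sum_(c : 'I_N * 'I_Nsub) (~~ ((c.1 == i) && s c.2) : nat))%:R.
  by rewrite natr_sum.
rewrite ler_nat; move: e1 e3 e4; rewrite e2; clear e2.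
move: (\sum_(c : 'I_N * 'I_Nsub) _)%N (\sum_(j : 'I_Nsub) (s j : nat))%N (\sum_(j : 'I_Nsub) (~~ s j : nat))%N => a b c.
case: Nsub S0 {s H1 sigma t i} => // n _ /=.
move=> e1 e3 h; lia.
Qed.
End Aux.
Theorem theorem9 (R : realType) (N Nsub : nat) (alpha : R) :
  (0 < N)%N -> (2 <= Nsub)%N -> 0 < alpha -> alpha < 1 ->
  forall eps : R, 0 < eps ->
  exists T0 : nat, forall T : nat, (T0 <= T)%N ->
    forall sigma : blocking Nsub T, feasible alpha sigma ->
      avg_age R N sigma <= (N * Nsub)%:R / (Nsub.-1)%:R + eps.
Proof.
move=> N0 S2 _ _ eps eps0; exists 0%N => T _ sigma [_ feas].
set B : R := (N * Nsub)%:R / (Nsub.-1)%:R.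
have S0 : (0 < Nsub)%N by apply: leq_trans S2.
have Sm0 : (Nsub.-1)%:R != 0 :> R by rewrite pnatr_eq0 -lt0n -ltnS prednK.
have NS0 : (N * Nsub)%:R != 0 :> R by rewrite pnatr_eq0 muln_eq0 negb_or -!lt0n N0 S0.
have B1 : 1 <= B.
  rewrite /B ler_pdivlMr; last by rewrite ltr0n -ltnS prednK.
  rewrite mul1r ler_nat.
  by rewrite (leq_trans (leq_pred _)) // leq_pmull.
set q : R := 1 - (Nsub.-1)%:R / (N * Nsub)%:R.
have qB : q * B = B - 1.
  rewrite /q /B mulrBl mul1r; congr (_ - _).
  by rewrite mulrA -(mulrA _ _ ((N * Nsub)%:R)) mulVf // mulr1 mulfV.
suff H : avg_age R N sigma <= B by apply: (le_trans H); rewrite lerDl ltW.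
case: T sigma feas => [|T] sigma feas.
  by rewrite /avg_age big_ord0 mulr0; apply: le_trans B1.
have xb : forall (i : 'I_N) (t : 'I_T.+1),
   0 <= (\sum_c G R sigma i t c) / #|{: 'I_N * 'I_Nsub}|%:R <= q.
  move=> i t; rewrite card_prod !card_ord; apply/andP; split.
    by apply: divr_ge0 => //; apply: sumr_ge0 => c _; rewrite ler0n.
  rewrite /q ler_pdivrMr; last by rewrite ltr0n muln_gt0 N0 S0.
  rewrite mulrBl mul1r mulfVK //.
  rewrite -natrB; last by rewrite (leq_trans (leq_pred _)) // leq_pmull.
  exact: G_sum_bound.
have eb : forall (i : 'I_N) (t : 'I_T.+1), exp_age R sigma i t <= B.
  move=> i t; rewrite (@exp_age_formula R N Nsub T.+1 sigma i t N0 S0 (ltnW (ltn_ord t))).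
  pose X := fun t0 : 'I_T.+1 => (\sum_c G R sigma i t0 c) / #|{: 'I_N * 'I_Nsub}|%:R.
  have E : forall m : 'I_t, \prod_(t0 < T.+1) (if (m <= t0 < t)%N then X t0 else 1)
     = \prod_(m <= s < t) X (inord s).
    move=> m; rewrite (@prod_ordT R T.+1 m t (fun s => X (inord s)) X (ltnW (ltn_ord t))) //.
    by move=> u; rewrite inord_val.
  rewrite (eq_bigr _ (fun m _ => E m)).
  by apply: (@rec_bound R _ q B) => // s _; apply: xb.
rewrite /avg_age.
apply: (@le_trans _ _ ((T.+1%:R)^-1 * \sum_(t < T.+1) ((N%:R)^-1 * \sum_(i < N) B))).
  apply: ler_wpM2l; first by rewrite invr_ge0 ler0n.
  apply: ler_sum => t _; apply: ler_wpM2l; first by rewrite invr_ge0 ler0n.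
  by apply: ler_sum => i _; apply: eb.
have h : forall (n : nat) (x : R), (n != 0)%N -> (n%:R)^-1 * (x *+ n) = x.
  move=> n x n0; rewrite -[x *+ n]mulr_natr mulrC -mulrA mulfV ?mulr1 //.
  by rewrite pnatr_eq0.
rewrite !sumr_const !card_ord.
rewrite -[N%:R^-1 * _]/((N%:R)^-1 * (B *+ N)) h; last by rewrite -lt0n.
by rewrite h.
Qed.
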